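(* Let $r>2$, $s>2$, $a,b\in(0,1)$ satisfy $r>as$, $s>br$. Define $$\beta_1=\frac{e^{s-2}}{e^{s-2}+1},\quad \beta_2=\frac{e^{s-1}-s}{e^{s-1}-2},\quad H_2(\beta)=(1-\beta)e^{s-1}+2\beta,\quad \mathcal H_2(\beta)=\max\{H_2(\beta),s\},$$ $$\alpha_1=\frac{e^{r-2}}{e^{r-2}+1},\quad \alpha_2=\frac{e^{r-1}-r}{e^{r-1}-2},\quad H_1(\alpha)=(1-\alpha)e^{r-1}+2\alpha,\quad \mathcal H_1(\alpha)=\max\{H_1(\alpha),r\}.$$ Then: (a) If $\beta<\beta_1$, the function $y\mapsto g(\beta,0,y)$ on $[0,\infty)$ has a unique local maximum, attained at a point $\bar y(\beta)\in(1,2)$, and $g(\beta,0,\bar y(\beta))<H_2(\beta)$; if $\beta\ge\beta_1$ the function $y\mapsto g(\beta,0,y)$ is monotone increasing. (b) $H_2(\beta)<s$ whenever $\beta\in(\beta_2,1)$. (c) $g(\beta,x,y)\le \mathcal H_2(\beta)$ for all $\beta\in(0,1)$, $x\in[0,e^{r-1}]$, $y\in[0,\mathcal H_2(\beta)]$. (d) For every $H>\mathcal H_2(\beta)$, $g(\beta,x,y)\le H$ for all $\beta\in(0,1)$, $x\in[0,e^{r-1}]$, $y\in[0,H]$. (e) If $\alpha<\alpha_1$, the function $x\mapsto f(\alpha,x,0)$ has a unique local maximum, attained at a point $\bar x(\alpha)\in(1,2)$, and $f(\alpha,\bar x(\alpha),0)<H_1(\alpha)$; if $\alpha\ge\alpha_1$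 the function $x\mapsto f(\alpha,x,0)$ is monotone increasing. (f) $H_1(\alpha)<r$ whenever $\alpha\in(\alpha_2,1)$. (g) $f(\alpha,x,y)\le\mathcal H_1(\alpha)$ for all $\alpha\in(0,1)$, $y\in[0,e^{s-1}]$, $x\in[0,\mathcal H_1(\alpha)]$. (h) For every $H>\mathcal H_1(\alpha)$, $f(\alpha,x,y)\le H$ for all $\alpha\in(0,1)$, $y\in[0,e^{s-1}]$, $x\in[0,H]$.
   Context: For $\alpha,\beta\in[0,1)$ and $x,y\ge 0$ set $f(\alpha,x,y)=x[(1-\alpha)e^{r-x-ay}+\alpha]$ and $g(\beta,x,y)=y[(1-\beta)e^{s-bx-y}+\beta]$. These are the two components of the prediction-based-controlled planar Ricker map $T_{\alpha,\beta}(x,y)=(f(\alpha,x,y),g(\beta,x,y))$. *)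

(* Defs.v *)
From Stdlib Require Import Reals.
Open Scope R_scope.

(* Components of the prediction-based-controlled planar Ricker map. *)
Definition ricker_f (r a alpha x y : R) : R :=
  x * ((1 - alpha) * exp (r - x - a * y) + alpha).
Definition ricker_g (s b beta x y : R) : R :=
  y * ((1 - beta) * exp (s - b * x - y) + beta).

Definition beta1 (s : R) : R := exp (s - 2) / (exp (s - 2) + 1).
Definition beta2 (s : R) : R := (exp (s - 1) - s) / (exp (s - 1) - 2).
Definition H2 (s beta : R) : R := (1 - beta) * exp (s - 1) + 2 * beta.
Definition calH2 (s beta : R) : R := Rmax (H2 s beta) s.

Definition alpha1 (r : R) : R := exp (r - 2) / (exp (r - 2) + 1).
Definition alpha2 (r : R) : R := (exp (r - 1) - r) / (exp (r - 1) - 2).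
Definition H1 (r alpha : R) : R := (1 - alpha) * exp (r - 1) + 2 * alpha.
Definition calH1 (r alpha : R) : R := Rmax (H1 r alpha) r.

Definition is_local_max_nonneg (phi : R -> R) (t0 : R) : Prop :=
  0 <= t0 /\
  exists d, 0 < d /\ forall t, 0 <= t -> Rabs (t - t0) < d -> phi t <= phi t0.

Definition increasing_nonneg (phi : R -> R) : Prop :=
  forall t1 t2, 0 <= t1 -> t1 < t2 -> phi t1 < phi t2.

(* Main.v *)
Require Import Defs.
From Stdlib Require Import Reals Lra Psatz.
From Coquelicot Require Import Coquelicot.
From Stdlib Require Import FunctionalExtensionality.
Open Scope R_scope.
Definition G (s be y : R) := y * ((1-be)*exp(s-y)+be).
Definition K (s y : R) := (y-1)*exp(s-y).

Lemma G_deriv s be c : derivable_pt_lim (G s be) c (be - (1-be)*K s c).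
Proof.
  apply is_derive_Reals. unfold G, K. auto_derive; auto. unfold Rminus; ring.
Qed.

Lemma MVT_G s be u v : u < v -> exists c, u < c < v /\
  G s be v - G s be u = (be - (1-be)*K s c)*(v-u).
Proof.
  intros huv. destruct (MVT_cor2 (G s be) (fun c => be - (1-be)*K s c) u v huv)
    as [c [h1 h2]]. intros; apply G_deriv. exists c; split; auto.
Qed.

Lemma exp_split s u v : exp (s-u) = exp (s-v) * exp (v-u).
Proof. rewrite <- exp_plus. f_equal. ring. Qed.

Lemma K1 s u v : 1 <= u -> u < v -> v <= 2 -> K s u < K s v.
Proof.
  intros h1 h2 h3. unfold K. rewrite (exp_split s u v).
  set (E := exp (s-v)). assert (hE : 0 < E) by apply exp_pos.
  set (d := v - u). set (p := u - 1).
  assert (hd : 0 < d) by (unfold d; lra).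
  assert (hp : 0 <= p) by (unfold p; lra).
  assert (hpd : p + d <= 1) by (unfold p, d; lra).
  assert (hed : exp d * (1 - d) < 1).
  { assert (Hm := exp_ineq1 (-d) ltac:(lra)).
    assert (exp d * exp (-d) = 1) by (rewrite <- exp_plus; replace (d + -d) with 0 by ring; apply exp_0).
    assert (0 < exp d) by apply exp_pos. nra. }
  assert (hed0 : 0 < exp d) by apply exp_pos.
  replace (v - 1) with (p + d) by (unfold p, d; ring).
  assert (p * exp d < p + d).
  { destruct (Req_dec p 0) as [->|hp0]; [lra|].
    assert (p * (exp d * (1-d)) < p) by nra.
    assert (p <= (p+d)*(1-d)) by nra.
    assert (0 < 1 - d) by lra.
    assert (p * exp d * (1-d) < (p+d)*(1-d)) by nra.
    nra. }
  nra.
Qed.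

Lemma K2 s u v : 2 <= u -> u < v -> K s v < K s u.
Proof.
  intros h1 h2. unfold K. rewrite (exp_split s u v).
  set (E := exp (s-v)). assert (hE : 0 < E) by apply exp_pos.
  set (d := v - u).
  assert (hd : 0 < d) by (unfold d; lra).
  assert (Hm := exp_ineq1 d ltac:(lra)).
  replace (v - 1) with ((u-1) + d) by (unfold d; ring).
  assert ((u-1)*(1+d) < (u-1)*exp d) by nra.
  assert ((u-1) + d < (u-1)*exp d) by nra.
  assert (((u-1) + d)*E < ((u-1)*exp d)*E) by nra.
  lra.
Qed.

Lemma K3 s u : u <= 1 -> K s u <= 0.
Proof. intros h. unfold K. assert (0 < exp (s-u)) by apply exp_pos. nra. Qed.

Lemma G_incr s be u v : 0 < be < 1 -> u < v ->
  (forall c, u < c < v -> (1-be)*K s c < be) -> G s be u < G s be v.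
Proof.
  intros hb huv H. destruct (MVT_G s be u v huv) as [c [hc he]].
  specialize (H c hc). nra.
Qed.

Lemma G_decr s be u v : 0 < be < 1 -> u < v ->
  (forall c, u < c < v -> be < (1-be)*K s c) -> G s be v < G s be u.
Proof.
  intros hb huv H. destruct (MVT_G s be u v huv) as [c [hc he]].
  specialize (H c hc). nra.
Qed.

Lemma y_le_exp y : y * exp (- y) <= exp (-1).
Proof.
  assert (h := exp_ineq1_le (y - 1)).
  assert (exp (y-1) * exp (-y) = exp (-1)) by (rewrite <- exp_plus; f_equal; ring).
  assert (0 < exp (-y)) by apply exp_pos. nra.
Qed.

Lemma y_lt_exp y : y <> 1 -> y * exp (- y) < exp (-1).
Proof.
  intro hy.
  assert (h := exp_ineq1 (y - 1) ltac:(lra)).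
  assert (exp (y-1) * exp (-y) = exp (-1)) by (rewrite <- exp_plus; f_equal; ring).
  assert (0 < exp (-y)) by apply exp_pos. nra.
Qed.

Lemma es s y : exp (s - y) = exp s * exp (-y).
Proof. rewrite <- exp_plus. f_equal; ring. Qed.

Lemma exp_le x y : x <= y -> exp x <= exp y.
Proof. intros [h|h]; [left; apply exp_increasing; auto | subst; lra]. Qed.

Lemma beta1_iff s be : 0 < be < 1 -> (be < beta1 s <-> be < (1-be) * K s 2).
Proof.
  intros hb. unfold beta1, K. replace (2-1) with 1 by ring. rewrite Rmult_1_l.
  assert (0 < exp (s-2)) by apply exp_pos.
  split; intro h.
  - apply (Rmult_lt_compat_r (exp (s-2) + 1)) in h; [|lra].
    field_simplify in h; lra.
  - apply (Rmult_lt_reg_r (exp (s-2) + 1)); [lra|]. field_simplify; lra.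
Qed.

Lemma K2pos s : 0 < K s 2.
Proof. unfold K. assert (0 < exp (s-2)) by apply exp_pos. lra. Qed.

Lemma Klt2 s c : c <> 2 -> K s c < K s 2.
Proof.
  intro hc. destruct (Rle_lt_dec c 1).
  - pose proof (K3 s c r). pose proof (K2pos s). lra.
  - destruct (Rlt_le_dec c 2). apply K1; lra. apply K2; lra.
Qed.

Lemma cont_f s be : continuity (fun y => (1-be)*K s y - be).
Proof. unfold K. reg. Qed.

Lemma partA_max s be : 2 < s -> 0 < be < 1 -> be < beta1 s ->
  exists ybar, 1 < ybar < 2 /\
    is_local_max_nonneg (G s be) ybar /\
    (forall y, is_local_max_nonneg (G s be) y -> y = ybar) /\
    G s be ybar < H2 s be.
Proof.
  intros hs hb hlt. apply (beta1_iff s be hb) in hlt.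
  assert (h1 : (1-be)*K s 1 - be < 0).
  { unfold K. replace (1-1) with 0 by ring. lra. }
  assert (h2 : 0 < (1-be)*K s 2 - be) by lra.
  destruct (IVT _ 1 2 (cont_f s be) ltac:(lra) h1 h2) as [yb [hyb hz]].
  assert (hyb1 : yb <> 1) by (intro; subst; lra).
  assert (hyb2 : yb <> 2) by (intro; subst; lra).
  assert (hKyb : (1-be)*K s yb = be) by lra.
  assert (below : forall c, c < yb -> (1-be)*K s c < be).
  { intros c hc. destruct (Rle_lt_dec c 1).
    - pose proof (K3 s c r). nra.
    - pose proof (K1 s c yb ltac:(lra) hc ltac:(lra)). nra. }
  assert (above : forall c, yb < c <= 2 -> be < (1-be)*K s c).
  { intros c hc. pose proof (K1 s yb c ltac:(lra) ltac:(lra) ltac:(lra)). nra. }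
  assert (hlm : is_local_max_nonneg (G s be) yb).
  { split; [lra|]. exists (2 - yb). split; [lra|].
    intros t ht htd. apply Rabs_def2 in htd.
    destruct (Rtotal_order t yb) as [h|[h|h]].
    - left. apply G_incr; auto. intros c hc; apply below; lra.
    - subst; lra.
    - left. apply G_decr; auto. intros c hc; apply above; lra. }
  exists yb. split; [lra|]. split; [exact hlm|]. split.
  - intros t [ht0 [d [hd hloc]]].
    destruct (Rtotal_order t yb) as [h|[h|h]]; [exfalso| auto | exfalso].
    + set (y := t + Rmin d (yb - t) / 2).
      assert (Rmin d (yb-t) <= d) by apply Rmin_l.
      assert (Rmin d (yb-t) <= yb - t) by apply Rmin_r.
      assert (0 < Rmin d (yb-t)) by (apply Rmin_pos; lra).
      assert (G s be t < G s be y).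
      { apply G_incr; auto. unfold y; lra. intros c hc; apply below. unfold y in hc; lra. }
      assert (G s be y <= G s be t).
      { apply hloc. unfold y; lra. unfold y. rewrite Rabs_right; lra. }
      lra.
    + destruct (Rle_lt_dec t 2).
      * set (y := t - Rmin d (t - yb) / 2).
        assert (Rmin d (t-yb) <= d) by apply Rmin_l.
        assert (Rmin d (t-yb) <= t - yb) by apply Rmin_r.
        assert (0 < Rmin d (t-yb)) by (apply Rmin_pos; lra).
        assert (G s be t < G s be y).
        { apply G_decr; auto. unfold y; lra. intros c hc; apply above. unfold y in hc; lra. }
        assert (G s be y <= G s be t).
        { apply hloc. unfold y; lra. unfold y. rewrite Rabs_left; lra. }
        lra.
      * destruct (Rle_lt_dec ((1-be)*K s t) be).
        -- set (y := t + d / 2).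
           assert (G s be t < G s be y).
           { apply G_incr; auto. unfold y; lra. intros c hc.
             pose proof (K2 s t c ltac:(lra) ltac:(unfold y in hc; lra)). nra. }
           assert (G s be y <= G s be t).
           { apply hloc. unfold y; lra. unfold y. rewrite Rabs_right; lra. }
           lra.
        -- set (y := t - Rmin d (t - 2) / 2).
           assert (Rmin d (t-2) <= d) by apply Rmin_l.
           assert (Rmin d (t-2) <= t - 2) by apply Rmin_r.
           assert (0 < Rmin d (t-2)) by (apply Rmin_pos; lra).
           assert (G s be t < G s be y).
           { apply G_decr; auto. unfold y; lra. intros c hc.
             pose proof (K2 s c t ltac:(unfold y in hc; lra) ltac:(lra)). nra. }
           assert (G s be y <= G s be t).
           { apply hloc. unfold y; lra. unfold y. rewrite Rabs_left; lra. }
           lra.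
  - unfold G, H2. pose proof (y_lt_exp yb hyb1).
    rewrite es. replace (s-1) with (s + -1) by ring. rewrite exp_plus.
    assert (0 < exp s) by apply exp_pos.
    assert (yb * exp (-yb) * exp s < exp (-1) * exp s) by nra.
    assert ((1-be)*(yb * exp (-yb) * exp s) < (1-be)*(exp (-1) * exp s)) by nra.
    assert (be * yb < be * 2) by nra.
    nra.
Qed.

Lemma partA_incr s be : 2 < s -> 0 < be < 1 -> beta1 s <= be -> increasing_nonneg (G s be).
Proof.
  intros hs hb hge.
  assert (hge' : (1-be)*K s 2 <= be).
  { destruct (Rle_lt_dec ((1-be)*K s 2) be); auto.
    apply (beta1_iff s be hb) in r; lra. }
  assert (hc : forall c, c <> 2 -> (1-be)*K s c < be).
  { intros c hc. pose proof (Klt2 s c hc). nra. }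
  intros t1 t2 h1 h12.
  destruct (Rle_lt_dec t2 2).
  - apply G_incr; auto. intros c hc'; apply hc; lra.
  - destruct (Rle_lt_dec 2 t1).
    + apply G_incr; auto. intros c hc'; apply hc; lra.
    + apply Rlt_trans with (G s be 2); apply G_incr; auto; intros c hc'; apply hc; lra.
Qed.

Lemma G_le2 s be y : 0 < be < 1 -> 0 <= y <= 2 -> G s be y <= H2 s be.
Proof.
  intros hb hy. unfold G, H2. pose proof (y_le_exp y).
  rewrite es. replace (s-1) with (s + -1) by ring. rewrite exp_plus.
  assert (0 < exp s) by apply exp_pos.
  assert (y * exp (-y) * exp s <= exp (-1) * exp s) by nra.
  assert ((1-be)*(y * exp (-y) * exp s) <= (1-be)*(exp (-1) * exp s)) by nra.
  assert (be * y <= be * 2) by nra.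
  nra.
Qed.

Lemma G_s s be : G s be s = s.
Proof. unfold G. replace (s-s) with 0 by ring. rewrite exp_0. ring. Qed.

Lemma G_small s be y : 2 < s -> 0 < be < 1 -> 0 <= y <= s -> G s be y <= calH2 s be.
Proof.
  intros hs hb hy. unfold calH2.
  destruct (Rle_lt_dec y 2).
  - eapply Rle_trans; [apply G_le2; auto; lra| apply Rmax_l].
  - destruct (Req_dec y s) as [->|hne].
    + rewrite G_s. apply Rmax_r.
    + destruct (Rle_lt_dec (G s be y) (Rmax (H2 s be) s)) as [h|h]; auto. exfalso.
      pose proof (G_le2 s be 2 hb ltac:(lra)).
      pose proof (Rmax_l (H2 s be) s). pose proof (Rmax_r (H2 s be) s).
      destruct (MVT_G s be 2 y r) as [c1 [hc1 e1]].
      destruct (MVT_G s be y s ltac:(lra)) as [c2 [hc2 e2]].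
      rewrite G_s in e2.
      assert (be - (1-be)*K s c1 > 0).
      { destruct (Rle_lt_dec (be - (1-be)*K s c1) 0); auto. nra. }
      assert (be - (1-be)*K s c2 < 0).
      { destruct (Rle_lt_dec 0 (be - (1-be)*K s c2)); auto. nra. }
      pose proof (K2 s c1 c2 ltac:(lra) ltac:(lra)). nra.
Qed.

Lemma G_big s be y : 0 < be < 1 -> 0 <= y -> s <= y -> G s be y <= y.
Proof.
  intros hb hy0 hy. unfold G. assert (exp (s-y) <= 1).
  { rewrite <- exp_0. apply exp_le. lra. }
  assert ((1-be)*exp (s-y) + be <= 1) by nra. nra.
Qed.

Lemma G_bound s be y M : 2 < s -> 0 < be < 1 -> calH2 s be <= M -> 0 <= y <= M -> G s be y <= M.
Proof.
  intros hs hb hM hy. destruct (Rle_lt_dec y s).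
  - pose proof (G_small s be y hs hb ltac:(lra)). lra.
  - pose proof (G_big s be y hb ltac:(lra) ltac:(lra)). lra.
Qed.

Lemma partB s be : 2 < s -> beta2 s < be < 1 -> H2 s be < s.
Proof.
  intros hs hb. unfold beta2, H2 in *.
  assert (exp 1 <= exp (s-1)) by (apply exp_le; lra).
  pose proof (exp_ineq1 1 ltac:(lra)).
  destruct hb as [hb1 hb2].
  apply (Rmult_lt_compat_r (exp (s-1) - 2)) in hb1; [|lra].
  field_simplify in hb1; [|lra]. nra.
Qed.

Lemma g_le s b be x y : 0 < b -> 0 < be < 1 -> 0 <= x -> 0 <= y ->
  ricker_g s b be x y <= G s be y.
Proof.
  intros hb hbe hx hy. unfold ricker_g, G.
  assert (exp (s - b*x - y) <= exp (s - y)) by (apply exp_le; nra).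
  assert ((1-be)*exp (s - b*x - y) <= (1-be)*exp (s-y)) by nra. nra.
Qed.

Lemma f_le r a al x y : 0 < a -> 0 < al < 1 -> 0 <= x -> 0 <= y ->
  ricker_f r a al x y <= G r al x.
Proof.
  intros ha hal hx hy. unfold ricker_f, G.
  assert (exp (r - x - a*y) <= exp (r - x)) by (apply exp_le; nra).
  assert ((1-al)*exp (r - x - a*y) <= (1-al)*exp (r-x)) by nra. nra.
Qed.

Lemma g0 s b be : (fun y => ricker_g s b be 0 y) = G s be.
Proof. apply functional_extensionality; intro y. unfold ricker_g, G. replace (s - b*0 - y) with (s - y) by ring. reflexivity. Qed.

Lemma f0 r a al : (fun x => ricker_f r a al x 0) = G r al.
Proof. apply functional_extensionality; intro y. unfold ricker_f, G. replace (r - y - a*0) with (r - y) by ring. reflexivity. Qed.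

Theorem mainTheorem1 (r s a b : R)
  (hr : 2 < r) (hs : 2 < s) (ha : 0 < a < 1) (hb : 0 < b < 1)
  (hras : r > a * s) (hsbr : s > b * r) :
  (* (a) *)
  (forall beta, 0 < beta < 1 ->
     (beta < beta1 s ->
        exists ybar, 1 < ybar < 2 /\
          is_local_max_nonneg (fun y => ricker_g s b beta 0 y) ybar /\
          (forall y, is_local_max_nonneg (fun y => ricker_g s b beta 0 y) y -> y = ybar) /\
          ricker_g s b beta 0 ybar < H2 s beta) /\
     (beta1 s <= beta -> increasing_nonneg (fun y => ricker_g s b beta 0 y))) /\
  (* (b) *)
  (forall beta, beta2 s < beta < 1 -> H2 s beta < s) /\
  (* (c) *)
  (forall beta x y, 0 < beta < 1 -> 0 <= x <= exp (r - 1) ->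
     0 <= y <= calH2 s beta -> ricker_g s b beta x y <= calH2 s beta) /\
  (* (d) *)
  (forall beta H, 0 < beta < 1 -> H > calH2 s beta ->
     forall x y, 0 <= x <= exp (r - 1) -> 0 <= y <= H -> ricker_g s b beta x y <= H) /\
  (* (e) *)
  (forall alpha, 0 < alpha < 1 ->
     (alpha < alpha1 r ->
        exists xbar, 1 < xbar < 2 /\
          is_local_max_nonneg (fun x => ricker_f r a alpha x 0) xbar /\
          (forall x, is_local_max_nonneg (fun x => ricker_f r a alpha x 0) x -> x = xbar) /\
          ricker_f r a alpha xbar 0 < H1 r alpha) /\
     (alpha1 r <= alpha -> increasing_nonneg (fun x => ricker_f r a alpha x 0))) /\
  (* (f) *)
  (forall alpha, alpha2 r < alpha < 1 -> H1 r alpha < r) /\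
  (* (g) *)
  (forall alpha x y, 0 < alpha < 1 -> 0 <= y <= exp (s - 1) ->
     0 <= x <= calH1 r alpha -> ricker_f r a alpha x y <= calH1 r alpha) /\
  (* (h) *)
  (forall alpha H, 0 < alpha < 1 -> H > calH1 r alpha ->
     forall x y, 0 <= y <= exp (s - 1) -> 0 <= x <= H -> ricker_f r a alpha x y <= H).
Proof.
  split; [|split; [|split; [|split; [|split; [|split; [|split]]]]]].
  - intros be hbe. rewrite g0. split.
    + intros h. destruct (partA_max s be hs hbe h) as [yb Hy].
      exists yb. replace (ricker_g s b be 0 yb) with (G s be yb)
        by (change (ricker_g s b be 0 yb) with ((fun y => ricker_g s b be 0 y) yb); rewrite g0; reflexivity). exact Hy.
    + apply partA_incr; auto.
  - intros be hbe. apply partB; auto.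
  - intros be x y hbe hx hy. eapply Rle_trans; [apply g_le; lra|].
    apply G_bound; auto; lra.
  - intros be H hbe hH x y hx hy. eapply Rle_trans; [apply g_le; lra|].
    apply G_bound; auto; lra.
  - intros al hal. rewrite f0. split.
    + intros h. destruct (partA_max r al hr hal h) as [xb Hx].
      exists xb. replace (ricker_f r a al xb 0) with (G r al xb)
        by (change (ricker_f r a al xb 0) with ((fun x => ricker_f r a al x 0) xb); rewrite f0; reflexivity). exact Hx.
    + apply partA_incr; auto.
  - intros al hal. apply partB; auto.
  - intros al x y hal hy hx. eapply Rle_trans; [apply f_le; lra|].
    apply G_bound; auto; unfold calH1, calH2, H1, H2 in *; lra.
  - intros al H hal hH x y hy hx. eapply Rle_trans; [apply f_le; lra|].
    apply G_bound; auto; unfold calH1, calH2, H1, H2 in *; lra.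
Qed.
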